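(* Assume $\lambda_{i_0}\neq0$ and $\mu_{j_0}\neq0$ for some $i_0\ge0$, $j_0\ge1$. For $p\ge1$ put $\widehat E_{-i_0,p}:=\lambda_{i_0}^{-1}\big(\lambda_{i_0}\mu_p-E_{-i_0,p}\big)$, and for $p\ge 0$ put $\widehat E_{-p,j_0}:=\mu_{j_0}^{-1}\big(E_{-p,j_0}-\lambda_p\mu_{j_0}\big)$. Let $\mathcal C$ be the commutative subalgebra of $\widehat{\mathcal A}$ generated by $a(-r)$ ($r\ge1$) and $a^*(-s)$ ($s\ge0$, $s\ne i_0$), regarded as a polynomial algebra in these variables. Then for all $k\ge 0$: (1) for every $\Phi\in\mathcal C$ and $p\ge1$: $\widehat E_{-i_0,p}\,\Phi\, I^k w=\Big(\frac{\partial\Phi}{\partial a(-p)}\Big)(I+1)^k w$; (2) for every $\Phi^*\in\mathcal C$ lying in the subalgebra generated by the $a^*(-s)$ ($s\ge0$, $s\ne i_0$) only, and every $p\ge0$: $\widehat E_{-p,j_0}\,\Phi^*\, I^k w=\Big(\frac{\partial\Phi^*}{\partial a^*(-p)}\Big)(I-1)^k w$ (the derivative being $0$ if $p=i_0$).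
   Context: Let $\widehat{\mathcal A}$ be the Weyl algebra: the unital associative complex algebra generated by $a(r),a^*(r)$ ($r\in\mathbb Z$) with relations $[a(r),a(s)]=[a^*(r),a^*(s)]=0$ and $[a(r),a^*(s)]=\delta_{r+s,0}$. Fix integers $n\ge 0$, $m\ge 1$, $\bm\lambda=(\lambda_0,\dots,\lambda_n)\in\mathbb C^{n+1}$, $\bm\mu=(\mu_1,\dots,\mu_m)\in\mathbb C^m$, and set $\lambda_i=0$ for $i>n$, $\mu_j=0$ for $j>m$. The Whittaker module $M_1(\bm\lambda,\bm\mu)=\widehat{\mathcal A}/\mathcal I$, where $\mathcal I$ is the left ideal generated by $a(i)-\lambda_i$ ($i\ge 0$) and $a^*(j)-\mu_j$ ($j\ge 1$); $w=w_{\bm\lambda,\bm\mu}$ denotes the image of $1$. Normal ordering: $:a(i)a^*(j):$ equals $a^*(j)a(i)$ if $i\ge 0$ and $j\le 0$, and equals $a(i)a^*(j)$ otherwise. For $i,j\in\mathbb Z$, $E_{i,j}:=\,:a(-i)a^*(j):$, and $I:=\sum_{j\in\mathbb Z}E_{j,j}$, a well-defined operator on $M_1(\bm\lambda,\bm\mu)$ commuting with all $E_{i,j}$. *)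

(* Defs.v *)
From HB Require Import structures.
From mathcomp Require Import all_boot all_order all_algebra.
From mathcomp Require Import mpoly.
From mathcomp Require Import complex.
From mathcomp Require Import Rstruct.
Set Implicit Arguments. Unset Strict Implicit. Unset Printing Implicit Defensive.
Import Order.TTheory GRing.Theory Num.Theory.
Local Open Scope ring_scope.

Definition CC : fieldType := complex Rdefinitions.R.

(* Generators of the commutative subalgebra: [inl r] stands for a(-r),
   [inr s] stands for a*(-s). *)
Definition genC := (nat + nat)%type.

Section Weyl.
Variable V : lmodType CC.
Variables (a astar : int -> V -> V).

(* normal ordered product  E_{i,j} = :a(-i) a*(j): as an operator on V *)
Definition Eop (i j : int) (v : V) : V :=
  if (0 <= - i) && (j <= 0) then astar j (a (- i) v) else a (- i) (astar j v).

Definition gen_op (g : genC) : V -> V :=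
  match g with inl r => a (- (r%:Z)) | inr s => astar (- (s%:Z)) end.

Definition mono_act n (var : 'I_n -> genC) (m : 'X_{1..n}) (v : V) : V :=
  foldr (fun k acc => iter (m k) (gen_op (var k)) acc) v (enum 'I_n).

Definition poly_act n (var : 'I_n -> genC) (P : {mpoly CC[n]}) (v : V) : V :=
  \sum_(m <- msupp P) P@_m *: mono_act var m v.
End Weyl.

(* partial derivative with respect to the generator g of a polynomial
   expressed in the variables var : 'I_n -> genC (chain rule) *)
Definition gen_deriv n (var : 'I_n -> genC) (g : genC) (P : {mpoly CC[n]}) :
  {mpoly CC[n]} := \sum_(k < n | var k == g) mpoly.mderiv k P.

(* Main.v *)
Require Import Defs.
From HB Require Import structures.
From mathcomp Require Import all_boot all_order all_algebra.
From mathcomp Require Import mpoly ssrcomplements zify.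
Import Order.TTheory GRing.Theory Num.Theory.
Local Open Scope ring_scope.
Set Implicit Arguments. Unset Strict Implicit. Unset Printing Implicit Defensive.
Definition islin (V : lmodType CC) (f : V -> V) :=
  forall (c : CC) x y, f (c *: x + y) = c *: f x + f y.

Lemma islin0 V f : @islin V f -> f 0 = 0.
Proof. move=> h; have E := h 1 0 0; rewrite !(scale1r, addr0) in E.
by apply: (addrI (f 0)); rewrite addr0 -E. Qed.
Lemma islinD V f : @islin V f -> forall x y, f (x + y) = f x + f y.
Proof. by move=> h x y; have := h 1 x y; rewrite !scale1r. Qed.
Lemma islinZ V f : @islin V f -> forall c x, f (c *: x) = c *: f x.
Proof. by move=> h c x; rewrite -[c *: x]addr0 h (islin0 h) addr0. Qed.
Lemma islinN V f : @islin V f -> forall x, f (- x) = - f x.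
Proof. by move=> h x; rewrite -scaleN1r islinZ // scaleN1r. Qed.
Lemma islinB V f : @islin V f -> forall x y, f (x - y) = f x - f y.
Proof. by move=> h x y; rewrite islinD // islinN. Qed.
Lemma islin_sum (V : lmodType CC) f (I : Type) (r : seq I) (P : pred I) (F : I -> V) :
  @islin V f -> f (\sum_(i <- r | P i) F i) = \sum_(i <- r | P i) f (F i).
Proof. move=> h; apply: (big_morph f (islinD h) (islin0 h)). Qed.

Lemma islin_iter (V : lmodType CC) g t : @islin V g -> islin (iter t g).
Proof. move=> h; elim: t => [|t IH] c x y //=. by rewrite IH h. Qed.

Lemma iter_comm (V : lmodType CC) (A g : V -> V) (c : CC) t v :
  islin A -> islin g -> (forall x, A (g x) = g (A x) + c *: x) ->
  A (iter t g v) = iter t g (A v) + (c * t%:R) *: iter t.-1 g v.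
Proof.
move=> hA hg hc; elim: t => [|t IH] /=; first by rewrite mulr0 scale0r addr0.
rewrite hc IH (islinD hg) (islinZ hg).
case: t IH => [|t] IH /=; first by rewrite mulr0 scale0r addr0 mulr1.
by rewrite -addrA -scalerDl -[t.+2]addn1 natrD mulrDr mulr1.
Qed.

Definition monos (V : lmodType CC) n (G : 'I_n -> V -> V) (s : seq 'I_n) (m : 'X_{1..n}) (v : V) :=
  foldr (fun k acc => iter (m k) (G k) acc) v s.

Lemma monos_lin (V : lmodType CC) n G s m : (forall k, islin (G k)) -> islin (@monos V n G s m).
Proof. move=> hG; elim: s => [|j s IH] c x y //=. by rewrite IH islin_iter. Qed.

Lemma monos_eq (V : lmodType CC) n G s (m1 m2 : 'X_{1..n}) v : {in s, m1 =1 m2} -> @monos V n G s m1 v = monos G s m2 v.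
Proof.
elim: s => [|j s IH] //= h; rewrite h ?mem_head // IH // => i hi.
by apply: h; rewrite in_cons hi orbT.
Qed.

Lemma monos_comm (V : lmodType CC) n (G : 'I_n -> V -> V) (A : V -> V) (c : 'I_n -> CC) s m v :
  islin A -> (forall k, islin (G k)) -> (forall k x, A (G k x) = G k (A x) + c k *: x) ->
  uniq s ->
  A (monos G s m v) = monos G s m (A v)
     + \sum_(j <- s) (c j * (m j)%:R) *: monos G s (m - U_(j))%MM v.
Proof.
move=> hA hG hc; elim: s => [|j s IH] /=; first by rewrite big_nil addr0.
case/andP=> js us; rewrite (iter_comm _ _ (hA) (hG j) (hc j)) IH //.
have hGi := islin_iter (m j) (hG j).
rewrite (islinD hGi) (islin_sum _ _ _ hGi) big_cons.
rewrite -!addrA; congr (_ + _); rewrite addrC; congr (_ + _).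
  congr (_ *: _); rewrite mnmBE mnm1E eqxx subn1; congr (iter _ _ _).
  apply: monos_eq => i iS; rewrite mnmBE mnm1E.
  have ij : j != i by apply: contraNneq js => ->.
  by rewrite (negbTE ij) subn0.
rewrite big_seq_cond [in RHS]big_seq_cond; apply: eq_bigr => i /andP [iS _].
rewrite (islinZ hGi); congr (_ *: _).
have ij : j != i by apply: contraNneq js => ->.
by rewrite mnmBE mnm1E eq_sym (negbTE ij) subn0.
Qed.

Definition pa (V : lmodType CC) n (G : 'I_n -> V -> V) (P : {mpoly CC[n]}) (v : V) :=
  \sum_(m <- msupp P) P@_m *: monos G (enum 'I_n) m v.

Lemma pa_w (V : lmodType CC) n (G : 'I_n -> V -> V) K (P : {mpoly CC[n]}) v : (msize P <= K)%N ->
  pa G P v = \sum_(m : 'X_{1..n < K}) P@_m *: monos G (enum 'I_n) m v.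
Proof.
move=> lt_pk; pose I : subFinType _ := 'X_{1..n < K}.
rewrite /pa (big_mksub I) //=; first last.
  by move=> x /msize_mdeg_lt /leq_trans; apply.
  by rewrite msupp_uniq.
by rewrite big_rmcond //= => i; move/memN_msupp_eq0 ->; rewrite scale0r.
Qed.

Lemma paD (V : lmodType CC) n (G : 'I_n -> V -> V) P Q v :
  pa G (P + Q) v = pa G P v + pa G Q v.
Proof.
pose K := maxn (msize P) (msize Q).
rewrite !(pa_w _ _ (K := K)) ?leq_maxl ?leq_maxr //; last first.
  by apply: leq_trans (msizeD_le _ _) _.
by rewrite -big_split /=; apply: eq_bigr => i _; rewrite mcoeffD scalerDl.
Qed.

Lemma paZ (V : lmodType CC) n (G : 'I_n -> V -> V) c P v :
  pa G (c *: P) v = c *: pa G P v.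
Proof.
rewrite !(pa_w _ _ (K := msize P)) //; last exact: msizeZ_le.
by rewrite scaler_sumr; apply: eq_bigr => i _; rewrite mcoeffZ scalerA.
Qed.

Lemma pa0 (V : lmodType CC) n (G : 'I_n -> V -> V) v : pa G 0 v = 0.
Proof. by rewrite /pa msupp0 big_nil. Qed.

Lemma paX (V : lmodType CC) n (G : 'I_n -> V -> V) m v :
  pa G 'X_[m] v = monos G (enum 'I_n) m v.
Proof. by rewrite /pa msuppX big_seq1 mcoeffX eqxx scale1r. Qed.

Lemma pa_sum (V : lmodType CC) n (G : 'I_n -> V -> V) (I : Type) (r : seq I) (Pr : pred I) F v :
  pa G (\sum_(i <- r | Pr i) F i) v = \sum_(i <- r | Pr i) pa G (F i) v.
Proof. exact: (big_morph (fun P => pa G P v) (fun P Q => paD G P Q v) (pa0 G v)). Qed.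

Lemma pa_lin (V : lmodType CC) n (G : 'I_n -> V -> V) P :
  (forall k, islin (G k)) -> islin (pa G P).
Proof.
move=> hG c x y; rewrite /pa scaler_sumr -big_split /=; apply: eq_bigr => i _.
by rewrite monos_lin // scalerDr !scalerA mulrC.
Qed.

Lemma pa_comm (V : lmodType CC) n (G : 'I_n -> V -> V) (A : V -> V) (c : 'I_n -> CC) P v :
  islin A -> (forall k, islin (G k)) -> (forall k x, A (G k x) = G k (A x) + c k *: x) ->
  A (pa G P v) = pa G P (A v) + \sum_(k < n) c k *: pa G (mpoly.mderiv k P) v.
Proof.
move=> hA hG hc; elim/mpolyind: P => [|c0 m P _ _ IH].
  by rewrite !pa0 (islin0 hA) big1 ?addr0 // => k _; rewrite mderiv0 pa0 scaler0.
rewrite !paD !paZ !paX (islinD hA) (islinZ hA) IH.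
rewrite (monos_comm _ _ hA hG hc (enum_uniq _)) big_enum /=.
under [in RHS]eq_bigr => k _ do rewrite mderivD mderivZ mderivX paD !paZ paX.
under [in RHS]eq_bigr => k _ do rewrite scalerDr.
rewrite big_split /= scalerDr -!addrA; congr (_ + _).
rewrite addrCA; congr (_ + _); congr (_ + _).
rewrite scaler_sumr; apply: eq_big => [k|k _]; first by rewrite inE.
by rewrite !scalerA mulrCA.
Qed.

Lemma pa_commb (V : lmodType CC) n (G : 'I_n -> V -> V) (A : V -> V) (e : CC) (b : pred 'I_n) P v :
  islin A -> (forall k, islin (G k)) -> (forall k x, A (G k x) = G k (A x) + (e * (b k)%:R) *: x) ->
  A (pa G P v) = pa G P (A v) + e *: pa G (\sum_(k < n | b k) mpoly.mderiv k P) v.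
Proof.
move=> hA hG hc; rewrite (pa_comm P v hA hG hc) pa_sum scaler_sumr; congr (_ + _).
rewrite [RHS]big_mkcond; apply: eq_bigr => k _; by case: (b k) => /=; rewrite ?mulr1 ?mulr0 ?scale0r ?scaler0 ?pa0.
Qed.

Lemma pa_comm0 (V : lmodType CC) n (G : 'I_n -> V -> V) (A : V -> V) P v :
  islin A -> (forall k, islin (G k)) -> (forall k x, A (G k x) = G k (A x)) ->
  A (pa G P v) = pa G P (A v).
Proof.
move=> hA hG hc.
have hc' : forall k x, A (G k x) = G k (A x) + (fun _ => 0 : CC) k *: x.
  by move=> k x; rewrite scale0r addr0.
rewrite (pa_comm P v hA hG hc') big1 ?addr0 // => k _; exact: scale0r.
Qed.

Lemma sum_delta (V : lmodType CC) (N : nat) (t : int) (x : V) : `|t| <= N%:Z ->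
  \sum_(i < (2*N).+1) ((i%:Z - N%:Z == t)%:R : CC) *: x = x.
Proof.
move=> ht; have hlt : (absz (N%:Z + t)%R < (2*N).+1)%N by lia.
rewrite (bigD1 (Ordinal hlt)) //= big1 ?addr0.
  by rewrite (_ : (_ == t) = true) ?scale1r //; apply/eqP; lia.
move=> i hi; rewrite (_ : (_ == t) = false) ?scale0r //; apply/negbTE/eqP => h.
by move/eqP: hi; apply; apply: val_inj => /=; lia.
Qed.

Lemma comm2 (V : lmodType CC) (X Y Ej : V -> V) (al be : CC) :
  islin X -> (forall y, X (Ej y) = Ej (X y) + al *: X y) ->
  (forall y, Y (Ej y) = Ej (Y y) + be *: Y y) -> al + be = 0 ->
  forall y, X (Y (Ej y)) = Ej (X (Y y)).
Proof.
move=> hX hXE hYE hab y; rewrite hYE (islinD hX) (islinZ hX) hXE -addrA -scalerDl.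
by rewrite hab scale0r addr0.
Qed.

Theorem lemma7p2
  (n m : nat) (hm : (1 <= m)%N)
  (lam mu : nat -> CC)
  (hlam : forall i : nat, (n < i)%N -> lam i = 0)
  (hmu : forall j : nat, (m < j)%N -> mu j = 0)
  (V : lmodType CC) (a astar : int -> V -> V)
  (ha_lin : forall r, linear (a r)) (hs_lin : forall r, linear (astar r))
  (haa : forall r s v, a r (a s v) = a s (a r v))
  (hss : forall r s v, astar r (astar s v) = astar s (astar r v))
  (has : forall r s v, a r (astar s v) - astar s (a r v) = (r + s == 0)%:R *: v)
  (w : V)
  (hwa : forall i : nat, a i%:Z w = lam i *: w)
  (hws : forall j : nat, (1 <= j)%N -> astar j%:Z w = mu j *: w)
  (I : V -> V)
  (hI : forall (v : V) (N : nat),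
      (forall j : int, N%:Z < `|j| -> Eop a astar j j v = 0) ->
      I v = \sum_(i < (2 * N).+1) Eop a astar (i%:Z - N%:Z) (i%:Z - N%:Z) v)
  (i0 j0 : nat) (hj0 : (1 <= j0)%N)
  (hli0 : lam i0 != 0) (hmj0 : mu j0 != 0)
  (k : nat) :
  (forall (nv : nat) (var : 'I_nv -> genC) (Phi : {mpoly CC[nv]}),
     (forall x, match var x with inl r => (0 < r)%N | inr s => s != i0 end) ->
     forall p : nat, (1 <= p)%N ->
     (lam i0)^-1 *: (lam i0 * mu p *: poly_act a astar var Phi (iter k I w)
                     - Eop a astar (- i0%:Z) p%:Z (poly_act a astar var Phi (iter k I w)))
     = poly_act a astar var (gen_deriv var (inl p) Phi) (iter k (fun v => I v + v) w))
  /\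
  (forall (nv : nat) (var : 'I_nv -> genC) (Phi : {mpoly CC[nv]}),
     (forall x, exists2 s, var x = inr s & s != i0) ->
     forall p : nat,
     (mu j0)^-1 *: (Eop a astar (- p%:Z) j0%:Z (poly_act a astar var Phi (iter k I w))
                    - lam p * mu j0 *: poly_act a astar var Phi (iter k I w))
     = poly_act a astar var (gen_deriv var (inr p) Phi) (iter k (fun v => I v - v) w)).
Proof.
have alin r : islin (a r) by move=> c x y; apply: ha_lin.
have slin r : islin (astar r) by move=> c x y; apply: hs_lin.
have has' r s v : a r (astar s v) = astar s (a r v) + (r + s == 0)%:R *: v.
  by apply/eqP; rewrite addrC -subr_eq has.
have has'' r s v : astar s (a r v) = a r (astar s v) - (r + s == 0)%:R *: v.
  by rewrite has' addrK.
pose E j := Eop a astar j j.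
have Edef j x : E j x = if (0 <= - j) && (j <= 0) then astar j (a (- j) x)
                        else a (- j) (astar j x) by [].
have Elin j : islin (E j).
  move=> c x y; rewrite !Edef; case: ifP => _.
    by rewrite (alin (-j) c x y) (slin j c).
  by rewrite (slin j c x y) (alin (-j) c).
have dlt r j (F : int -> V) : (r + j == 0)%:R *: F (- j) = (j == - r)%:R *: F r.
  case: (eqVneq j (-r)) => [->|ne]; first by rewrite opprK addrN eqxx.
  rewrite (_ : (r + j == 0) = false) ?scale0r //.
  by apply/negbTE; apply: contra ne; rewrite addrC addr_eq0.
have dls s j (F : int -> V) : (- j + s == 0)%:R *: F j = (j == s)%:R *: F s.
  case: (eqVneq j s) => [->|ne]; first by rewrite addNr eqxx.
  rewrite (_ : (- j + s == 0) = false) ?scale0r //.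
  by apply/negbTE; apply: contra ne; rewrite addrC subr_eq0 eq_sym.
have Ea r j x : a r (E j x) = E j (a r x) + (j == - r)%:R *: a r x.
  rewrite !Edef; case: ifP => _.
    rewrite (has' r j) (haa r (-j)); congr (_ + _).
    exact: (dlt r j (fun t => a t x)).
  rewrite (haa r (-j)) (has' r j) (islinD (alin _)) (islinZ (alin _)); congr (_ + _).
  exact: (dlt r j (fun t => a t x)).
have Es s j x : astar s (E j x) = E j (astar s x) + (- (j == s)%:R) *: astar s x.
  rewrite !Edef scaleNr; case: ifP => _.
    rewrite (hss s j) (has'' (-j) s) (islinB (slin _)) (islinZ (slin _)); congr (_ - _).
    exact: (dls s j (fun t => astar t x)).
  rewrite (has'' (-j) s) (hss s j); congr (_ - _).
  exact: (dls s j (fun t => astar t x)).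
have Ecomm i j x : E i (E j x) = E j (E i x).
  rewrite [E i (E j x)]Edef [E i x]Edef; case: ifP => _.
    apply: (comm2 (slin i) (Es i j) (Ea (-i) j)).
    by rewrite opprK addNr.
  apply: (comm2 (alin (-i)) (Ea (-i) j) (Es i j)).
  by rewrite opprK addrN.
have hI' v N : (forall j : int, N%:Z < `|j| -> E j v = 0) ->
    I v = \sum_(i < (2 * N).+1) E (i%:Z - N%:Z) v := hI v N.
pose good N v := forall j : int, N%:Z < `|j| -> E j v = 0.
have good_le N N' v : good N v -> (N <= N')%N -> good N' v.
  by move=> g le j hj; apply: g; lia.
have good_a N r v : good N v -> `|r| <= N%:Z -> good N (a r v).
  move=> g hr j hj; have : a r (E j v) = 0 by rewrite g // islin0.
  rewrite Ea (_ : (j == -r) = false) ?scale0r ?addr0 //.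
  by apply/negbTE/eqP => e; lia.
have good_s N s v : good N v -> `|s| <= N%:Z -> good N (astar s v).
  move=> g hr j hj; have : astar s (E j v) = 0 by rewrite g // islin0.
  rewrite Es (_ : (j == s) = false) ?oppr0 ?scale0r ?addr0 //.
  by apply/negbTE/eqP => e; lia.
have good_lin N c u v : good N u -> good N v -> good N (c *: u + v).
  by move=> gu gv j hj; rewrite (Elin j c) gu // gv // scaler0 addr0.
have good_I N v : good N v -> good N (I v).
  move=> g j hj; rewrite (hI' _ _ g) (islin_sum _ _ _ (Elin j)) big1 // => i _.
  by rewrite Ecomm g // islin0.
have good_w : good (n + m)%N w.
  move=> j hj; rewrite Edef; case: j hj => t ht.
    case: ifP => [/andP [_ h]|_]; first by exfalso; lia.
    rewrite hws; last by lia.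
    by rewrite hmu ?scale0r ?islin0 //; lia.
  rewrite (_ : (0 <= - Negz t) && (Negz t <= 0) = true); last by apply/andP; split; lia.
  rewrite NegzE opprK hwa hlam ?scale0r ?islin0 //; lia.
pose goodE v := exists N, good N v.
have gE_a r v : goodE v -> goodE (a r v).
  move=> [N g]; exists (N + absz r)%N; apply: good_a; last by lia.
  by apply: good_le g _; lia.
have gE_s r v : goodE v -> goodE (astar r v).
  move=> [N g]; exists (N + absz r)%N; apply: good_s; last by lia.
  by apply: good_le g _; lia.
have gE_I v : goodE v -> goodE (I v) by move=> [N g]; exists N; exact: good_I.
have gE_lin c u v : goodE u -> goodE v -> goodE (c *: u + v).
  move=> [N1 g1] [N2 g2]; exists (maxn N1 N2); apply: good_lin.
    by apply: good_le g1 _; exact: leq_maxl.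
  by apply: good_le g2 _; exact: leq_maxr.
have gE_D u v : goodE u -> goodE v -> goodE (u + v).
  by move=> gu gv; rewrite -[u]scale1r; exact: gE_lin.
have gE_B u v : goodE u -> goodE v -> goodE (u - v).
  by move=> gu gv; rewrite -scaleN1r addrC; exact: gE_lin.
have gE_Z c v : goodE v -> goodE (c *: v).
  move=> gv; rewrite -[c *: v]addr0; apply: gE_lin => //.
  by exists 0%N => j _; exact: islin0.
have gE_iter (F : V -> V) : (forall v, goodE v -> goodE (F v)) ->
    forall k y, goodE y -> goodE (iter k F y).
  by move=> hF k0 y gy; elim: k0 => //= k0 IH; exact: hF.
have Ia r v : goodE v -> a r (I v) = I (a r v) + a r v.
  move=> [N0 g0]; pose N := (N0 + absz r)%N.
  have g : good N v by apply: good_le g0 _; rewrite /N; lia.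
  have hr : `|r| <= N%:Z by rewrite /N; lia.
  have ga := good_a N r v g hr.
  rewrite (hI' _ _ g) (hI' _ _ ga) (islin_sum _ _ _ (alin r)).
  under eq_bigr => i _ do rewrite Ea.
  by rewrite big_split /=; congr (_ + _); apply: sum_delta; rewrite normrN.
have Is s v : goodE v -> astar s (I v) = I (astar s v) - astar s v.
  move=> [N0 g0]; pose N := (N0 + absz s)%N.
  have g : good N v by apply: good_le g0 _; rewrite /N; lia.
  have hr : `|s| <= N%:Z by rewrite /N; lia.
  have ga := good_s N s v g hr.
  rewrite (hI' _ _ g) (hI' _ _ ga) (islin_sum _ _ _ (slin s)).
  under eq_bigr => i _ do rewrite Es scaleNr.
  by rewrite big_split /= sumrN; congr (_ - _); apply: sum_delta.
have IZ c v : goodE v -> I (c *: v) = c *: I v.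
  move=> [N g]; have gc : good N (c *: v).
    by move=> j hj; rewrite (islinZ (Elin j)) g // scaler0.
  rewrite (hI' _ _ g) (hI' _ _ gc) scaler_sumr; apply: eq_bigr => i _.
  exact: (islinZ (Elin _)).
have gE_Ip v : goodE v -> goodE (I v + v) by move=> gv; apply: gE_D => //; exact: gE_I.
have gE_Im v : goodE v -> goodE (I v - v) by move=> gv; apply: gE_B => //; exact: gE_I.
have It1 r k0 y : goodE y -> a r (iter k0 I y) = iter k0 (fun v => I v + v) (a r y).
  move=> gy; elim: k0 => //= k0 IH; rewrite Ia ?IH //; exact: gE_iter gE_I _ _ gy.
have It2 s k0 y : goodE y -> astar s (iter k0 I y) = iter k0 (fun v => I v - v) (astar s y).
  move=> gy; elim: k0 => //= k0 IH; rewrite Is ?IH //; exact: gE_iter gE_I _ _ gy.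
have It3 r k0 z : goodE z -> a r (iter k0 (fun v => I v - v) z) = iter k0 I (a r z).
  move=> gz; elim: k0 => //= k0 IH.
  have gz' := gE_iter _ gE_Im k0 z gz.
  by rewrite (islinB (alin r)) Ia // addrK IH.
have ItZ (F : V -> V) : (forall c v, goodE v -> F (c *: v) = c *: F v) ->
    (forall v, goodE v -> goodE (F v)) -> forall k0 c y, goodE y ->
    iter k0 F (c *: y) = c *: iter k0 F y.
  move=> hFZ hFg k0 c y gy; elim: k0 => //= k0 IH.
  by rewrite IH hFZ //; exact: gE_iter.
have ItZ0 := ItZ I IZ gE_I.
have ItZp : forall k0 c y, goodE y ->
    iter k0 (fun v => I v + v) (c *: y) = c *: iter k0 (fun v => I v + v) y.
  by apply: ItZ => // c v gv; rewrite IZ // scalerDr.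
have ItZm : forall k0 c y, goodE y ->
    iter k0 (fun v => I v - v) (c *: y) = c *: iter k0 (fun v => I v - v) y.
  by apply: ItZ => // c v gv; rewrite IZ // scalerBr.
have gw : goodE w by exists (n + m)%N.
split.
- move=> nv var Phi hvar p hp.
  pose G := fun k => gen_op a astar (var k).
  have hG : forall k, islin (G k).
    by move=> k'; rewrite /G; case: (var k') => ? /=; [exact: alin | exact: slin].
  have pe : forall P v, poly_act a astar var P v = pa G P v by [].
  rewrite !pe.
  have Ee y : Eop a astar (- i0%:Z) p%:Z y = a i0%:Z (astar p%:Z y).
    rewrite /Eop opprK (_ : (p%:Z <= 0) = false) ?andbF //.
    by apply/negbTE; rewrite -ltNge; lia.
  rewrite Ee.
  set x := iter k I w.
  have hcS : forall k' y, astar p (G k' y) = G k' (astar p y)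
                                          + (-1 * (var k' == inl p)%:R) *: y.
    move=> k' y; rewrite /G; case: (var k') => [r|s] /=.
      rewrite has'' mulN1r scaleNr; congr (_ - _ *: _); congr (_%:R); congr nat_of_bool.
      apply/eqP/eqP; last by case=> ->; rewrite addNr.
      by move=> h; rewrite (_ : r = p) //; lia.
    by rewrite hss mulr0 scale0r addr0.
  have hcA : forall k' y, a i0 (G k' y) = G k' (a i0 y).
    move=> k' y; rewrite /G; move: (hvar k'); case: (var k') => [r|s] hv /=.
      exact: haa.
    rewrite has' (_ : (_ == 0) = false) ?scale0r ?addr0 //.
    by apply/negbTE/eqP => e; move/eqP: hv; apply; lia.
  rewrite (pa_commb (e := -1) (b := fun k' => var k' == inl p) _ _ (slin p) hG hcS).
  rewrite (islinD (alin i0)) (islinZ (alin i0)).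
  rewrite !(pa_comm0 _ _ (alin i0) hG hcA).
  have hx1 : a i0 (astar p x) = (lam i0 * mu p) *: x.
    rewrite /x It2 // (It3 _ _ _ (gE_s _ _ gw)) has' hwa (islinZ (slin _)) hws //.
    rewrite (_ : (_ == 0) = false) ?scale0r ?addr0; last by apply/negbTE/eqP; lia.
    by rewrite scalerA ItZ0.
  have hx2 : a i0 x = lam i0 *: iter k (fun v => I v + v) w.
    by rewrite /x It1 // hwa ItZp.
  rewrite hx1 hx2 !(islinZ (pa_lin _ hG)) /gen_deriv.
  by rewrite opprD addrA subrr add0r scaleN1r opprK scalerA mulVf // scale1r.
- move=> nv var Phi hvar p.
  pose G := fun k => gen_op a astar (var k).
  have hG : forall k, islin (G k).
    by move=> k'; rewrite /G; case: (var k') => ? /=; [exact: alin | exact: slin].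
  have pe : forall P v, poly_act a astar var P v = pa G P v by [].
  rewrite !pe.
  have Ee y : Eop a astar (- p%:Z) j0%:Z y = a p%:Z (astar j0%:Z y).
    rewrite /Eop opprK (_ : (j0%:Z <= 0) = false) ?andbF //.
    by apply/negbTE; rewrite -ltNge; lia.
  rewrite Ee.
  set x := iter k I w.
  have hcA : forall k' y, a p (G k' y) = G k' (a p y)
                                          + (1 * (var k' == inr p)%:R) *: y.
    move=> k' y; rewrite /G; have [s hs _] := hvar k'; rewrite hs /= mul1r.
    rewrite has'; congr (_ + _ *: _); congr (_%:R); congr nat_of_bool.
    apply/eqP/eqP; last by case=> ->; rewrite addrN.
    by move=> h; rewrite (_ : s = p) //; lia.
  have hcS : forall k' y, astar j0 (G k' y) = G k' (astar j0 y).
    by move=> k' y; rewrite /G; have [s hs _] := hvar k'; rewrite hs /= hss.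
  rewrite !(pa_comm0 _ _ (slin j0) hG hcS).
  rewrite (pa_commb (e := 1) (b := fun k' => var k' == inr p) _ _ (alin p) hG hcA).
  have hx1 : a p (astar j0 x) = (lam p * mu j0) *: x.
    rewrite /x It2 // (It3 _ _ _ (gE_s _ _ gw)) has' hwa (islinZ (slin _)) hws //.
    rewrite (_ : (_ == 0) = false) ?scale0r ?addr0; last by apply/negbTE/eqP; lia.
    by rewrite scalerA ItZ0.
  have hx2 : astar j0 x = mu j0 *: iter k (fun v => I v - v) w.
    by rewrite /x It2 // hws // ItZm.
  rewrite hx1 hx2 !(islinZ (pa_lin _ hG)) /gen_deriv.
  by rewrite addrAC subrr add0r scale1r scalerA mulVf // scale1r.
Qed.
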